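(* Let $L=L(m,n;k,l)$ be an $L$-shaped supergrid graph. Then $L$ contains a Hamiltonian cycle if and only if $L$ has no vertex of degree $1$.
   Context: The infinite supergrid graph has as vertices all points $(x,y)\in\mathbb{Z}^2$, two distinct vertices $u=(u_x,u_y)$, $v=(v_x,v_y)$ being adjacent iff $|u_x-v_x|\le 1$ and $|u_y-v_y|\le 1$. A supergrid graph is a finite vertex-induced subgraph of it. For integers $m,n>1$ and $k,l\ge 1$ with $m-k\ge 1$ and $n-l\ge 1$, the $L$-shaped supergrid graph $L(m,n;k,l)$ is the supergrid graph induced by the vertex set $\{(x,y):1\le x\le m,\ 1\le y\le n\}\setminus\{(x,y): m-k+1\le x\le m,\ 1\le y\le l\}$ (i.e. the rectangle $R(m,n)$ with an $k\times l$ block removed from its upper-right corner, where $(1,1)$ is the upper-left corner and $y$ increases downward). A cycle is a closed simple path on at least $3$ distinct vertices. *)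

(* Defs.v *)
From mathcomp Require Import all_boot.
Set Implicit Arguments. Unset Strict Implicit. Unset Printing Implicit Defensive.

(* Vertices of the infinite supergrid: points of Z^2; every vertex of an
   L-shaped supergrid graph has positive coordinates, so we use nat * nat. *)
Definition vertex := (nat * nat)%type.

Definition close1 (a b : nat) : bool := (a <= b.+1) && (b <= a.+1).

Definition sg_adj (u v : vertex) : bool :=
  (u != v) && close1 u.1 v.1 && close1 u.2 v.2.

(* vertex set of L(m,n;k,l): R(m,n) minus the k x l block in the upper-right corner *)
Definition inL (m n k l : nat) (v : vertex) : bool :=
  [&& 1 <= v.1 <= m, 1 <= v.2 <= n &
      ~~ ((m - k + 1 <= v.1 <= m) && (1 <= v.2 <= l))].

Definition Lverts (m n k l : nat) : seq vertex :=
  [seq v <- [seq (x, y) | x <- iota 1 m, y <- iota 1 n] | inL m n k l v].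

Definition Ldeg (m n k l : nat) (v : vertex) : nat :=
  count (sg_adj v) (Lverts m n k l).

Definition has_ham_cycle (m n k l : nat) : Prop :=
  exists c : seq vertex,
    [/\ uniq c, 3 <= size c, cycle sg_adj c &
        forall v, (v \in c) = inL m n k l v].

(* Main.v *)
Require Import Defs.
From mathcomp Require Import all_boot zify.
Set Implicit Arguments. Unset Strict Implicit. Unset Printing Implicit Defensive.

Fixpoint cp (s : seq vertex) : seq (vertex * vertex) :=
  match s with x :: ((y :: _) as s') => (x, y) :: cp s' | _ => [::] end.
Definition ein (s : seq vertex) u w := ((u,w) \in cp s) || ((w,u) \in cp s).

Lemma ein_sym s u w : ein s u w = ein s w u.
Proof. by rewrite /ein orbC. Qed.

Lemma cp_cons2 x y s : cp (x :: y :: s) = (x,y) :: cp (y :: s).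
Proof. by []. Qed.

Lemma cp_cat s1 x s2 : cp (s1 ++ x :: s2) = cp (rcons s1 x) ++ cp (x :: s2).
Proof.
elim: s1 => [|y s1 IH]; first by [].
case: s1 IH => [|z s1] IH; first by [].
have -> : (y :: z :: s1) ++ x :: s2 = y :: ((z :: s1) ++ x :: s2) by [].
have -> : rcons (y :: z :: s1) x = y :: rcons (z :: s1) x by [].
by rewrite !cp_cons2 IH.
Qed.

Lemma cp_rcons2 s x y : cp (rcons (rcons s x) y) = rcons (cp (rcons s x)) (x,y).
Proof.
have -> : rcons (rcons s x) y = s ++ x :: [:: y] by rewrite -!cats1 -catA.
by rewrite cp_cat /= cats1.
Qed.

Lemma cp_rev s : cp (rev s) = map (fun p => (p.2, p.1)) (rev (cp s)).
Proof.
elim: s => [|x s IH] //=. case: s IH => [|y s] IH //=.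
rewrite rev_cons [rev (y :: s)]rev_cons cp_rcons2 -rev_cons IH.
by rewrite rev_cons map_rcons.
Qed.

Lemma ein_rev s u w : ein (rev s) u w = ein s u w.
Proof.
rewrite /ein cp_rev.
have H : forall p q, ((p,q) \in [seq (x.2, x.1) | x <- rev (cp s)]) = ((q,p) \in cp s).
  move=> p q; apply/mapP/idP => [[[q' p'] Hx [-> ->]] | H].
    by rewrite -mem_rev.
  by exists (q,p) => //; rewrite mem_rev.
by rewrite !H orbC.
Qed.

Lemma cp_split s x y : (x,y) \in cp s -> exists p1 p2, s = p1 ++ x :: y :: p2.
Proof.
elim: s => [|z s IH] //=. case: s IH => [|t s] IH //=.
rewrite in_cons => /orP [/eqP [-> ->] | /IH [p1 [p2 E]]].
  by exists [::], s.
by exists (z :: p1), p2; rewrite E.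
Qed.

Lemma cp_map f s : cp (map f s) = map (fun p => (f p.1, f p.2)) (cp s).
Proof.
elim: s => [|x s IH]; first by []. case: s IH => [|y s] IH; first by [].
by rewrite map_cons map_cons cp_cons2 -map_cons IH.
Qed.

Lemma ein_map f s u w u' w' : ein s u w -> f u = u' -> f w = w' -> ein (map f s) u' w'.
Proof.
rewrite /ein cp_map => /orP [H|H] <- <-; apply/orP; [left|right];
  by apply/mapP; eexists; [exact H|].
Qed.

Lemma close1_sym a b : close1 a b = close1 b a.
Proof. by rewrite /close1 andbC. Qed.

Lemma sg_adj_sym : symmetric sg_adj.
Proof. by move=> u v; rewrite /sg_adj eq_sym close1_sym [close1 u.2 _]close1_sym. Qed.

Definition HC m n k l c :=
  [/\ uniq c, 3 <= size c, cycle sg_adj c & forall v, (v \in c) = inL m n k l v].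

Lemma cp_ins p1 x Q y p2 :
  cp (p1 ++ x :: (Q ++ y :: p2)) = cp (rcons p1 x) ++ cp (x :: rcons Q y) ++ cp (y :: p2).
Proof.
rewrite cp_cat. have -> : x :: (Q ++ y :: p2) = (x :: Q) ++ y :: p2 by [].
by rewrite cp_cat rcons_cons.
Qed.

Lemma ins_core c x y Q :
  uniq c -> cycle sg_adj c -> (x,y) \in cp c -> uniq Q -> (forall q, q \in Q -> q \notin c) ->
  path sg_adj x (rcons Q y) ->
  exists c', [/\ uniq c', cycle sg_adj c', (forall v, (v \in c') = (v \in Q) || (v \in c)),
     size c <= size c' &
     ((forall u w, ein c u w -> ~~ ((u == x) && (w == y)) -> ~~ ((u == y) && (w == x)) -> ein c' u w) /\
     (forall u w, ein (x :: rcons Q y) u w -> ein c' u w))].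
Proof.
move=> Uc Cc /cp_split [p1 [p2 E]] UQ DQ PQ.
have Ec : c = rcons p1 x ++ y :: p2 by rewrite E -cats1 -catA.
set c' := rcons p1 x ++ Q ++ y :: p2.
have Pc : perm_eq c' (Q ++ c) by rewrite /c' Ec perm_catCA.
exists c'; split.
- rewrite (perm_uniq Pc) cat_uniq Uc UQ /= andbT.
  by apply/hasPn => v Hv; apply/negP => /DQ; rewrite Hv.
- move: Cc; rewrite Ec -(rot_cycle (size (rcons p1 x))) rot_size_cat.
  have -> : c' = (rcons p1 x ++ Q) ++ y :: p2 by rewrite /c' catA.
  rewrite -(rot_cycle (size (rcons p1 x ++ Q)) sg_adj ((rcons p1 x ++ Q) ++ y :: p2)) rot_size_cat /=.
  rewrite !rcons_cat !cat_path /= rcons_path last_rcons PQ andbT.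
  by case/andP => -> /andP [-> _].
- by move=> v; rewrite (perm_mem Pc) mem_cat.
- by rewrite (perm_size Pc) size_cat leq_addl.
split.
- have Ecp : cp c = cp (rcons p1 x) ++ (x,y) :: cp (y :: p2) by rewrite E cp_cat.
  have Ecp' : cp c' = cp (rcons p1 x) ++ cp (x :: rcons Q y) ++ cp (y :: p2).
    have -> : c' = p1 ++ x :: (Q ++ y :: p2) by rewrite /c' -cats1 -catA.
    exact: cp_ins.
  move=> u w; rewrite /ein Ecp Ecp' !mem_cat !in_cons !xpair_eqE => H H1 H2.
  case/orP: H => /or3P [] H; rewrite ?H ?orbT //.
    by rewrite H in H1.
  by rewrite andbC H in H2.
- have Ecp' : cp c' = cp (rcons p1 x) ++ cp (x :: rcons Q y) ++ cp (y :: p2).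
    have -> : c' = p1 ++ x :: (Q ++ y :: p2) by rewrite /c' -cats1 -catA.
    exact: cp_ins.
  by move=> u w; rewrite /ein Ecp' !mem_cat => /orP [->|->]; rewrite ?orbT.
Qed.

Lemma ins c x y Q :
  uniq c -> cycle sg_adj c -> ein c x y -> uniq Q -> (forall q, q \in Q -> q \notin c) ->
  path sg_adj x (rcons Q y) ->
  exists c', [/\ uniq c', cycle sg_adj c', (forall v, (v \in c') = (v \in Q) || (v \in c)),
     size c <= size c' &
     ((forall u w, ein c u w -> ~~ ((u == x) && (w == y)) -> ~~ ((u == y) && (w == x)) -> ein c' u w) /\
     (forall u w, ein (x :: rcons Q y) u w -> ein c' u w))].
Proof.
move=> Uc Cc /orP [H|H] UQ DQ PQ; first exact: ins_core.
have H' : (x,y) \in cp (rev c) by rewrite cp_rev; apply/mapP; exists (y,x); rewrite ?mem_rev.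
have Cr : cycle sg_adj (rev c).
  by rewrite rev_cycle (eq_cycle (e' := sg_adj)) // => u w; exact: sg_adj_sym.
have Ur : uniq (rev c) by rewrite rev_uniq.
have Dr : forall q, q \in Q -> q \notin rev c by move=> q Hq; rewrite mem_rev DQ.
have [c' [U C M S [E1 E2]]] := ins_core Ur Cr H' UQ Dr PQ.
exists c'; split => //.
- by move=> v; rewrite M mem_rev.
- by rewrite size_rev in S.
split => //.
- by move=> u w; rewrite -ein_rev; exact: E1.
Qed.

Lemma gpath_aux (g : nat -> vertex) i len :
  (forall j, i <= j -> j < i + len -> sg_adj (g j) (g j.+1)) ->
  path sg_adj (g i) (map g (iota i.+1 len)).
Proof.
elim: len i => [|len IH] i H //=.
rewrite H ?IH //; try lia.
by move=> j Hj1 Hj2; apply: H; lia.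
Qed.

Lemma iotaS1 i n : iota i n.+1 = rcons (iota i n) (i + n).
Proof. by rewrite -addn1 iotaD /= cats1. Qed.

Lemma gpath (g : nat -> vertex) N :
  (forall i, i < N.+1 -> sg_adj (g i) (g i.+1)) ->
  path sg_adj (g 0) (rcons (map g (iota 1 N)) (g N.+1)).
Proof.
move=> H. have -> : rcons (map g (iota 1 N)) (g N.+1) = map g (iota 1 N.+1).
  by rewrite iotaS1 map_rcons add1n.
by apply: gpath_aux => j _ Hj; apply: H; lia.
Qed.

Lemma gedge_aux (g : nat -> vertex) i j len :
  j <= i -> i.+1 < j + len -> (g i, g i.+1) \in cp (map g (iota j len)).
Proof.
elim: len j => [|len IH] j H1 H2; first lia.
case: len IH H2 => [|len] IH H2; first lia.
rewrite /= in_cons. case: (eqVneq i j) => [->|ne]; first by rewrite eqxx.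
apply/orP; right; apply: (IH j.+1); lia.
Qed.

Lemma gedge (g : nat -> vertex) N i :
  i < N.+1 -> ein (g 0 :: rcons (map g (iota 1 N)) (g N.+1)) (g i) (g i.+1).
Proof.
move=> H. have -> : g 0 :: rcons (map g (iota 1 N)) (g N.+1) = map g (iota 0 N.+2).
  by rewrite iotaS1 map_rcons.
by rewrite /ein gedge_aux //; lia.
Qed.

Lemma gmem (g : nat -> vertex) N v :
  reflect (exists2 i, 1 <= i <= N & v = g i) (v \in map g (iota 1 N)).
Proof.
apply: (iffP mapP) => [[i Hi ->]|[i Hi ->]]; exists i => //.
  by rewrite mem_iota in Hi; lia.
by rewrite mem_iota; lia.
Qed.

Lemma guniq (g : nat -> vertex) N :
  (forall i j, 1 <= i <= N -> 1 <= j <= N -> g i == g j -> i = j) ->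
  uniq (map g (iota 1 N)).
Proof.
move=> H; rewrite map_inj_in_uniq ?iota_uniq // => i j.
rewrite !mem_iota => Hi Hj E; apply: H; rewrite ?E //; lia.
Qed.

Definition P a k b l := exists c, HC (a+k) (b+l) k l c /\
  [/\ ein c (1, (b+l).-1) (1, b+l), ein c (1, b+l) (2, b+l),
      (2 <= a -> ein c (1,1) (2,1)) & (2 <= b -> ein c (a+k, (b+l).-1) (a+k, b+l))].

Ltac crush := try apply/eqP;
  repeat (match goal with |- context [if ?b then _ else _] => case: ifP => ? end);
  rewrite ?/sg_adj ?/close1 ?/inL /= ?xpair_eqE; lia.

Definition g2 m n i : vertex := if i == 0 then (1,n) else if i == 1 then (1,n.+1)
   else if i <= m.+1 then (i.-1, n.+2) else if i <= 2*m then (2*m+2-i, n.+1) else (2, n).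

Lemma g2_inj m n i j : 1 <= i <= 2*m -> 1 <= j <= 2*m -> g2 m n i == g2 m n j -> i = j.
Proof. rewrite /g2; try move=> ?; crush. Qed.
Lemma g2_N m n : 1 <= m -> g2 m n (2*m).+1 = (2,n).
Proof. rewrite /g2; try move=> ?; crush. Qed.
Lemma g2_adj m n i : 2 <= m -> i < (2*m).+1 -> sg_adj (g2 m n i) (g2 m n i.+1).
Proof. rewrite /g2; try move=> ?; crush. Qed.
Lemma g2_out m n k l i : 1 <= i <= 2*m -> ~~ inL m n k l (g2 m n i).
Proof. rewrite /g2; try move=> ?; crush. Qed.
Lemma g2_in m n k l i : k < m -> l < n -> 1 <= i <= 2*m -> inL m n.+2 k l (g2 m n i).
Proof. rewrite /g2; try move=> ?; crush. Qed.
Lemma L_mono2 m n k l v : inL m n k l v -> inL m n.+2 k l v.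
Proof. case: v => x y; crush. Qed.
Lemma L_new2 m n k l v : l < n -> inL m n.+2 k l v -> ~~ inL m n k l v ->
  exists2 i, 1 <= i <= 2*m & v = g2 m n i.
Proof.
case: v => x y Hl H1 H2.
exists (if y == n.+2 then x.+1 else if x == 1 then 1 else 2*m+2-x); move: H1 H2.
  crush.
rewrite /inL /= => H1 H2; case: ifP => ?; last case: ifP => ?; rewrite /g2; crush.
Qed.
Lemma g2_vals m n : 2 <= m ->
  [/\ g2 m n 1 = (1, n.+2.-1), g2 m n 2 = (1, n.+2), g2 m n 3 = (2, n.+2),
      g2 m n m.+1 = (m, n.+2) & g2 m n m.+2 = (m, n.+2.-1)].
Proof. move=> Hm; split; rewrite /g2; crush. Qed.

Lemma G2 a k b l : 1 <= a -> 1 <= k -> 1 <= b -> 1 <= l -> P a k b l -> P a k b.+2 l.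
Proof.
move=> ha hk hb hl; rewrite /P.
have -> : b.+2 + l = (b+l).+2 by rewrite !addSn.
have hm : 2 <= a + k by lia.
have hkm : k < a + k by lia.
have hln : l < b + l by lia.
move: hm hkm hln; move: (a + k) => m hm hkm; move: (b + l) => n hln.
case=> c [[Uc Sc Cc Mc] [E1 E2 E3 E4]].
have [v1 v2 v3 v4 v5] := g2_vals n hm.
have hm1 : 1 <= m by apply: ltnW.
have Hx : ein c (g2 m n 0) (g2 m n (2*m).+1) by rewrite g2_N.
have UQ : uniq (map (g2 m n) (iota 1 (2*m))) by apply: guniq => i j; exact: g2_inj.
have DQ : forall q, q \in map (g2 m n) (iota 1 (2*m)) -> q \notin c.
  by move=> q /gmem [i Hi ->]; rewrite Mc g2_out.
have PQ : path sg_adj (g2 m n 0) (rcons (map (g2 m n) (iota 1 (2*m))) (g2 m n (2*m).+1)).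
  by apply: gpath => i Hi; apply: g2_adj.
have [c' [U' C' M' S' [F1 F2]]] := ins Uc Cc Hx UQ DQ PQ.
exists c'; split.
  split => //. exact: leq_trans Sc S'.
  move=> v; rewrite M'; apply/idP/idP.
    case/orP => [/gmem [i Hi ->]|]; first exact: g2_in.
    by rewrite Mc; apply: L_mono2.
  move=> H; case E: (inL m n k l v); first by rewrite Mc E orbT.
  by apply/orP; left; apply/gmem; apply: (@L_new2 m n k l v) => //; rewrite E.
split.
- rewrite -v1 -v2; apply: F2; apply: gedge; clear -hm; lia.
- rewrite -v2 -v3; apply: F2; apply: gedge; clear -hm; lia.
- move=> /E3 H; apply: F1 => //; rewrite g2_N //= !xpair_eqE; clear -hl hln hm; lia.
- move=> _; rewrite ein_sym -v4 -v5; apply: F2; apply: gedge; clear -hm; lia.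
Qed.

Definition g1 m b l i : vertex := if i == 0 then (m, b+l) else if i == 1 then (m.+1, b+l)
   else if i <= b.+1 then (m.+2, b+l+2-i) else if i <= 2*b then (m.+1, l+i-b-1)
   else (m, (b+l).-1).

Lemma g1_inj m b l i j : 1 <= i <= 2*b -> 1 <= j <= 2*b -> g1 m b l i == g1 m b l j -> i = j.
Proof. rewrite /g1; try move=> ?; crush. Qed.
Lemma g1_N m b l : 1 <= b -> g1 m b l (2*b).+1 = (m, (b+l).-1).
Proof. rewrite /g1; try move=> ?; crush. Qed.
Lemma g1_adj m b l i : 2 <= b -> i < (2*b).+1 -> sg_adj (g1 m b l i) (g1 m b l i.+1).
Proof. rewrite /g1; try move=> ?; crush. Qed.
Lemma g1_out m b l k i : 1 <= i <= 2*b -> ~~ inL m (b+l) k l (g1 m b l i).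
Proof. rewrite /g1; try move=> ?; crush. Qed.
Lemma g1_in m b l k i : k < m -> 1 <= i <= 2*b -> inL m.+2 (b+l) k.+2 l (g1 m b l i).
Proof. rewrite /g1; try move=> ?; crush. Qed.
Lemma L_mono1 m n k l v : k < m -> inL m n k l v -> inL m.+2 n k.+2 l v.
Proof. case: v => x y; crush. Qed.
Lemma L_new1 m b l k v : k < m -> inL m.+2 (b+l) k.+2 l v -> ~~ inL m (b+l) k l v ->
  exists2 i, 1 <= i <= 2*b & v = g1 m b l i.
Proof.
case: v => x y Hk H1 H2.
exists (if x == m.+2 then b+l+2-y else if y == b+l then 1 else y-l+b+1); move: H1 H2.
  crush.
rewrite /inL /= => H1 H2; case: ifP => ?; last case: ifP => ?; rewrite /g1; crush.
Qed.
Lemma g1_vals m b l : 2 <= b ->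
  [/\ g1 m b l 0 = (m, b+l), g1 m b l 2 = (m.+2, b+l) & g1 m b l 3 = (m.+2, (b+l).-1)].
Proof. move=> Hb; split; rewrite /g1; crush. Qed.

Lemma G1 a k b l : 1 <= a -> 1 <= k -> 2 <= b -> 1 <= l -> P a k b l -> P a k.+2 b l.
Proof.
move=> ha hk hb hl; rewrite /P.
have -> : a + k.+2 = (a+k).+2 by rewrite !addnS.
have hm : 2 <= a + k by lia.
have hkm : k < a + k by lia.
move: hm hkm; move: (a + k) => m hm hkm.
case=> c [[Uc Sc Cc Mc] [E1 E2 E3 E4]].
have [v0 v2 v3] := g1_vals m l hb.
have hb1 : 1 <= b by apply: ltnW.
have Hx : ein c (g1 m b l 0) (g1 m b l (2*b).+1) by rewrite g1_N // v0 ein_sym; apply: E4.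
have UQ : uniq (map (g1 m b l) (iota 1 (2*b))) by apply: guniq => i j; exact: g1_inj.
have DQ : forall q, q \in map (g1 m b l) (iota 1 (2*b)) -> q \notin c.
  by move=> q /gmem [i Hi ->]; rewrite Mc g1_out.
have PQ : path sg_adj (g1 m b l 0) (rcons (map (g1 m b l) (iota 1 (2*b))) (g1 m b l (2*b).+1)).
  by apply: gpath => i Hi; apply: g1_adj.
have [c' [U' C' M' S' [F1 F2]]] := ins Uc Cc Hx UQ DQ PQ.
exists c'; split.
  split => //. exact: leq_trans Sc S'.
  move=> v; rewrite M'; apply/idP/idP.
    case/orP => [/gmem [i Hi ->]|]; first exact: g1_in.
    by rewrite Mc; apply: L_mono1.
  move=> H; case E: (inL m (b+l) k l v); first by rewrite Mc E orbT.
  by apply/orP; left; apply/gmem; apply: (@L_new1 m b l k v) => //; rewrite E.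
have gN := g1_N m l hb1.
split.
- apply: F1 => //; rewrite v0 gN /= !xpair_eqE; clear -hm; lia.
- apply: F1 => //; rewrite v0 gN /= !xpair_eqE; clear -hm; lia.
- move=> /E3 H; apply: F1 => //; rewrite v0 gN /= !xpair_eqE; clear -hm; lia.
- move=> _; rewrite ein_sym -v2 -v3; apply: F2; apply: gedge; clear -hb; lia.
Qed.

Definition psi m n (v : vertex) : vertex := (n.+1 - v.2, m.+1 - v.1).

Lemma psi_in m n k l v : inL m n k l v -> inL n m l k (psi m n v).
Proof. case: v => x y; rewrite /psi; crush. Qed.
Lemma psi_inv m n k l w : inL n m l k w -> inL m n k l (psi n m w) /\ w = psi m n (psi n m w).
Proof.
case: w => x y H; split; first by move: H; rewrite /psi /=; crush.
rewrite /psi /inL /= in H *; apply/eqP; rewrite xpair_eqE; lia.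
Qed.
Lemma psi_inj m n k l u w : inL m n k l u -> inL m n k l w -> psi m n u == psi m n w -> u == w.
Proof. case: u => x y; case: w => x' y'; rewrite /psi /= !xpair_eqE; crush. Qed.
Lemma psi_adj m n k l u w : inL m n k l u -> inL m n k l w ->
  sg_adj (psi m n u) (psi m n w) = sg_adj u w.
Proof.
case: u => x y; case: w => x' y'; rewrite /psi /sg_adj /close1 /inL /= !xpair_eqE => H1 H2.
apply/idP/idP; crush.
Qed.

Lemma Psym a k b l : 1 <= a -> 1 <= k -> 1 <= b -> 1 <= l -> P a k b l -> P b l a k.
Proof.
move=> ha hk hb hl; rewrite /P.
have hkm : k < a + k by lia.
have hln : l < b + l by lia.
move: hkm; move: (a + k) => m hkm; move: hln; move: (b + l) => n hln.
case=> c [[Uc Sc Cc Mc] [E1 E2 E3 E4]].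
have Pc : all (inL m n k l) c by apply/allP => v; rewrite Mc.
exists (map (psi m n) c); split.
  split.
  - rewrite map_inj_in_uniq // => u w; rewrite !Mc => Hu Hw E.
    by apply/eqP; apply: (psi_inj Hu Hw); rewrite E.
  - by rewrite size_map.
  - have Hmono : {in inL m n k l &, {mono psi m n : u w / sg_adj u w >-> sg_adj u w}}.
      by move=> u w Hu Hw; exact: (@psi_adj m n k l u w Hu Hw).
    by rewrite (mono_cycle_in Hmono Pc).
  - move=> v; apply/mapP/idP => [[u Hu ->]|H].
      by apply: psi_in; rewrite -Mc.
    have [H1 H2] := psi_inv H; exists (psi n m v) => //; by rewrite Mc.
split.
- rewrite ein_sym; apply: (@ein_map (psi m n) c _ _ _ _ E2); rewrite /psi /=; apply/eqP; rewrite xpair_eqE; clear -hkm hln; lia.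
- rewrite ein_sym; apply: (@ein_map (psi m n) c _ _ _ _ E1); rewrite /psi /=; apply/eqP; rewrite xpair_eqE; clear -hkm hln; lia.
- move=> /E4; rewrite ein_sym => H.
  apply: (@ein_map (psi m n) c _ _ _ _ H); rewrite /psi /=; apply/eqP; rewrite xpair_eqE; clear -hkm hln; lia.
- move=> /E3; rewrite ein_sym => H.
  apply: (@ein_map (psi m n) c _ _ _ _ H); rewrite /psi /=; apply/eqP; rewrite xpair_eqE; clear -hkm hln; lia.
Qed.
Definition base_cycle (a k b l : nat) : seq vertex :=
  match (a,k,b,l) with
  | (1,1,1,1) => [:: (2,2); (1,2); (1,1)]
  | (1,1,2,1) => [:: (1,1); (2,2); (2,3); (1,3); (1,2)]
  | (1,2,2,1) => [:: (1,1); (2,2); (3,2); (3,3); (2,3); (1,3); (1,2)]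
  | (1,1,3,1) => [:: (1,2); (1,1); (2,2); (2,3); (2,4); (1,4); (1,3)]
  | (1,2,3,1) => [:: (1,2); (1,1); (2,2); (2,3); (3,2); (3,3); (3,4); (2,4); (1,4); (1,3)]
  | (2,1,1,1) => [:: (3,2); (2,2); (1,2); (1,1); (2,1)]
  | (2,1,2,1) => [:: (1,1); (2,1); (2,2); (3,2); (3,3); (2,3); (1,3); (1,2)]
  | (2,2,2,1) => [:: (1,1); (2,1); (2,2); (3,2); (4,2); (4,3); (3,3); (2,3); (1,3); (1,2)]
  | (2,1,3,1) => [:: (1,2); (1,1); (2,1); (2,2); (2,3); (3,2); (3,3); (3,4); (2,4); (1,4); (1,3)]
  | (2,2,3,1) => [:: (1,2); (1,1); (2,1); (2,2); (2,3); (3,2); (3,3); (4,2); (4,3); (4,4); (3,4); (2,4); (1,4); (1,3)]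
  | (2,1,1,2) => [:: (1,1); (2,1); (2,2); (3,3); (2,3); (1,3); (1,2)]
  | (2,1,2,2) => [:: (1,2); (1,1); (2,1); (2,2); (2,3); (3,3); (3,4); (2,4); (1,4); (1,3)]
  | (2,2,2,2) => [:: (1,2); (1,1); (2,1); (2,2); (2,3); (3,3); (4,3); (4,4); (3,4); (2,4); (1,4); (1,3)]
  | (2,1,3,2) => [:: (1,3); (1,2); (1,1); (2,1); (2,2); (2,3); (2,4); (3,3); (3,4); (3,5); (2,5); (1,5); (1,4)]
  | (2,2,3,2) => [:: (1,3); (1,2); (1,1); (2,1); (2,2); (2,3); (2,4); (3,3); (3,4); (4,3); (4,4); (4,5); (3,5); (2,5); (1,5); (1,4)]
  | (3,1,1,1) => [:: (3,1); (4,2); (3,2); (2,2); (1,2); (1,1); (2,1)]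
  | (3,1,2,1) => [:: (1,1); (2,1); (2,2); (3,1); (3,2); (4,2); (4,3); (3,3); (2,3); (1,3); (1,2)]
  | (3,2,2,1) => [:: (1,1); (2,1); (2,2); (3,1); (3,2); (4,2); (5,2); (5,3); (4,3); (3,3); (2,3); (1,3); (1,2)]
  | (3,1,3,1) => [:: (1,2); (1,1); (2,1); (2,2); (2,3); (3,2); (3,1); (4,2); (3,3); (4,3); (4,4); (3,4); (2,4); (1,4); (1,3)]
  | (3,2,3,1) => [:: (1,2); (1,1); (2,1); (2,2); (2,3); (3,2); (3,1); (4,2); (3,3); (4,3); (5,2); (5,3); (5,4); (4,4); (3,4); (2,4); (1,4); (1,3)]
  | (3,1,1,2) => [:: (1,1); (2,1); (2,2); (3,1); (3,2); (4,3); (3,3); (2,3); (1,3); (1,2)]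
  | (3,1,2,2) => [:: (1,2); (1,1); (2,1); (2,2); (3,1); (3,2); (2,3); (3,3); (4,3); (4,4); (3,4); (2,4); (1,4); (1,3)]
  | (3,2,2,2) => [:: (1,2); (1,1); (2,1); (2,2); (3,1); (3,2); (2,3); (3,3); (4,3); (5,3); (5,4); (4,4); (3,4); (2,4); (1,4); (1,3)]
  | (3,1,3,2) => [:: (1,3); (1,2); (1,1); (2,1); (2,2); (3,1); (3,2); (2,3); (2,4); (3,3); (3,4); (4,3); (4,4); (4,5); (3,5); (2,5); (1,5); (1,4)]
  | (3,2,3,2) => [:: (1,3); (1,2); (1,1); (2,1); (2,2); (3,1); (3,2); (2,3); (2,4); (3,3); (3,4); (4,3); (4,4); (5,3); (5,4); (5,5); (4,5); (3,5); (2,5); (1,5); (1,4)]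
  | _ => [::]
  end.

Lemma Lverts_mem m n k l v : (v \in Lverts m n k l) = inL m n k l v.
Proof.
rewrite mem_filter; case H: (inL m n k l v) => //=.
case: v H => x y H; apply: (allpairs_f (fun x y => (x, y))); rewrite mem_iota;
  move: H; rewrite /inL /=; lia.
Qed.

Lemma Lverts_uniq m n k l : uniq (Lverts m n k l).
Proof.
apply: filter_uniq; apply: allpairs_uniq; rewrite ?iota_uniq //.
by move=> [x y] [x' y'] _ _ /=.
Qed.

Definition chkP a k b l c :=
  uniq c && (3 <= size c) && cycle sg_adj c && all (inL (a+k) (b+l) k l) c &&
  all (fun v => v \in c) (Lverts (a+k) (b+l) k l) &&
  ein c (1,(b+l).-1) (1,b+l) && ein c (1,b+l) (2,b+l) &&
  ((2 <= a) ==> ein c (1,1) (2,1)) && ((2 <= b) ==> ein c (a+k,(b+l).-1) (a+k,b+l)).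

Lemma base_ok a k b l c : chkP a k b l c -> P a k b l.
Proof.
rewrite /chkP => /andP [H e4]; move/andP: H => [H e3]; move/andP: H => [H e2].
move/andP: H => [H e1]; move/andP: H => [H A2]; move/andP: H => [H A1].
move/andP: H => [H C]; move/andP: H => [U S].
exists c; split; last by split => //; apply/implyP.
split => // v; apply/idP/idP => [|H]; first by move/(allP A1).
by apply: (allP A2); rewrite Lverts_mem.
Qed.

Lemma base_ok' a k b l : chkP a k b l (base_cycle a k b l) -> P a k b l.
Proof. exact: base_ok. Qed.

Lemma allP_ s : forall a k b l, a+k+b+l <= s -> 1 <= a -> 1 <= k -> 1 <= b -> 1 <= l ->
  (a = 1 -> l = 1) -> (b = 1 -> k = 1) -> P a k b l.
Proof.
elim: s => [|s IH] a k b l Hs ha hk hb hl va vb; first lia.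
case: (leqP 3 k) => Hk.
  have -> : k = (k-2).+2 by lia.
  apply: G1; try lia. apply: IH; lia.
case: (leqP 3 l) => Hl.
  have -> : l = (l-2).+2 by lia.
  apply: Psym; try lia. apply: G1; try lia. apply: IH; lia.
case: (leqP 4 b) => Hb.
  have -> : b = (b-2).+2 by lia.
  apply: G2; try lia. apply: IH; lia.
case: (leqP 4 a) => Ha.
  have -> : a = (a-2).+2 by lia.
  apply: Psym; try lia. apply: G2; try lia. apply: IH; lia.
clear IH Hs.
have : a \in [:: 1; 2; 3] by rewrite !inE; lia.
have : b \in [:: 1; 2; 3] by rewrite !inE; lia.
have : k \in [:: 1; 2] by rewrite !inE; lia.
have : l \in [:: 1; 2] by rewrite !inE; lia.
rewrite !inE.
move=> /orP [] /eqP E1 /orP [] /eqP E2 /or3P [] /eqP E3 /or3P [] /eqP E4; subst;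
  try (exfalso; lia);
  apply: base_ok'; vm_compute; reflexivity.
Qed.

Arguments sg_adj : simpl never.

Lemma count_ge2 c v : cycle sg_adj c -> 3 <= size c -> v \in c -> 2 <= count (sg_adj v) c.
Proof.
move=> Cc Sc Hv.
have E : rot (index v c) c = v :: (drop (index v c).+1 c ++ take (index v c) c).
  by rewrite /rot (drop_nth v) ?index_mem // nth_index.
have Hc : count (sg_adj v) c = count (sg_adj v) (rot (index v c) c).
  by apply/esym/permP; rewrite perm_rot.
rewrite Hc E. have := size_rot (index v c) c. rewrite -(rot_cycle (index v c)) E in Cc.
move: Cc; rewrite E.
case: (drop _ _ ++ _) => [|h p] /=; first by move=> _ S; rewrite -S in Sc.
case/lastP: p => [|q z] /=; first by move=> _ S; rewrite -S in Sc.
rewrite rcons_path last_rcons => /andP [H1 /andP [_ H2]] _.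
rewrite -cats1 count_cat /= H1 (sg_adj_sym v z) H2.
lia.
Qed.

Lemma deg_one m n k l v w : inL m n k l w ->
  (forall u, inL m n k l u -> sg_adj v u = (u == w)) -> Ldeg m n k l v = 1.
Proof.
move=> Hw H; rewrite /Ldeg (eq_in_count (a2 := pred1 w)).
  by rewrite count_uniq_mem ?Lverts_uniq ?Lverts_mem ?Hw.
by move=> u; rewrite Lverts_mem; exact: H.
Qed.

Unset Implicit Arguments.
Theorem theorem2 (m n k l : nat) :
  1 < m -> 1 < n -> 1 <= k -> 1 <= l -> 1 <= m - k -> 1 <= n - l ->
  has_ham_cycle m n k l <->
  ~ (exists v : vertex, inL m n k l v /\ Ldeg m n k l v = 1).
Proof.
move=> Hm Hn Hk Hl Ha Hb; split.
- case=> c [Uc Sc Cc Mc] [v [Hv Hd]].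
  have Pc : perm_eq c (Lverts m n k l).
    by apply: uniq_perm => //; [exact: Lverts_uniq | move=> w; rewrite Lverts_mem Mc].
  have : 2 <= count (sg_adj v) c by apply: count_ge2 => //; rewrite Mc.
  by rewrite (permP Pc) -/(Ldeg m n k l v) Hd.
- move=> H.
  have va : m - k = 1 -> l = 1.
    move=> E; case: (leqP l 1) => Hl1; first lia.
    exfalso; apply: H; exists (1,1); split; first by rewrite /inL /=; lia.
    apply: (@deg_one _ _ _ _ _ (1,2)); first by rewrite /inL /=; lia.
    move=> [x y]; rewrite /inL /sg_adj /close1 /= !xpair_eqE => Hu.
    apply/idP/idP => ?; lia.
  have vb : n - l = 1 -> k = 1.
    move=> E; case: (leqP k 1) => Hk1; first lia.
    exfalso; apply: H; exists (m,n); split; first by rewrite /inL /=; lia.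
    apply: (@deg_one _ _ _ _ _ (m.-1,n)); first by rewrite /inL /=; lia.
    move=> [x y]; rewrite /inL /sg_adj /close1 /= !xpair_eqE => Hu.
    apply/idP/idP => ?; lia.
  have [c [[Uc Sc Cc Mc] _]] := allP_ (leqnn _) Ha Hk Hb Hl va vb.
  exists c; split => // v; rewrite Mc; congr inL; lia.
Qed.
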